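(* Let $N\ge 1$, let $f:Z[1,N]\times\mathbb{R}\to\mathbb{R}$ be continuous in its second variable for every $k\in Z[1,N]$, and let $p:Z[1,N+2]\to\mathbb{R}$, $q:Z[1,N+1]\to\mathbb{R}$. Assume that (1) there exists $m>0$ such that $s f(k,s)\ge 0$ for all $|s|\ge m$ and $k\in Z[1,N]$; (2) $\eta'(p)\,p_{\min}-\eta(q)\,q_{\max}>0$. Then the functional $J$ is coercive on $E$ and the boundary value problem $$\Delta^2\big(p(k)\Delta^2 y(k-2)\big)+\Delta\big(q(k)\Delta y(k-1)\big)+f(k,y(k))=0\ \ (k\in Z[1,N]),\qquad y(-1)=y(0)=y(N+1)=y(N+2)=0$$ has at least one solution. Moreover, if there exists $k_0\in Z[1,N]$ with $f(k_0,0)\ne 0$, this solution is non-zero.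
   Context: $Z[a,b]=[a,b]\cap\mathbb{Z}$; $\Delta x(k)=x(k+1)-x(k)$, $\Delta^2=\Delta\circ\Delta$; $\Delta^2(p(k)\Delta^2y(k-2))$ means $\Delta^2$ applied to $k\mapsto p(k)\Delta^2 y(k-2)$, similarly for $\Delta(q(k)\Delta y(k-1))$. A solution is a function $y:Z[-1,N+2]\to\mathbb{R}$ satisfying the equation and boundary conditions. $E=\{y:Z[-1,N+2]\to\mathbb{R}\mid y(-1)=y(0)=y(N+1)=y(N+2)=0\}$ with norm $\|y\|=(\sum_{k=1}^N y(k)^2)^{1/2}$; $F(k,s)=\int_0^s f(k,t)dt$; $J(y)=\sum_{k=1}^{N+2}\frac{p(k)}{2}(\Delta^2 y(k-2))^2-\sum_{k=1}^{N+1}\frac{q(k)}{2}(\Delta y(k-1))^2+\sum_{k=1}^N F(k,y(k))$. $J$ is coercive if $J(y)\to+\infty$ as $\|y\|\to\infty$. $p_{\min}=\min_{Z[1,N+2]}p$, $p_{\max}=\max_{Z[1,N+2]}p$, $q_{\min}=\min_{Z[1,N+1]}q$, $q_{\max}=\max_{Z[1,N+1]}q$. With $\tilde y=(y(1),\dots,y(N))^T$, let $V$ be the $(N+1)\times N$ matrix with $V\tilde y=(\Delta y(0),\dots,\Delta y(N))^T$ and $W$ the $(N+2)\times N$ matrix with $W\tilde y=(\Delta^2y(-1),\dots,\Delta^2y(N))^T$ for $y\in E$; $\lambda_1$, $\lambda_2$ are the smallest eigenvalues of $V^TV$ and $W^TW$ respectively. Define $\eta'(p)=\lambda_2$ if $p_{\min}\ge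 0$ and $\eta'(p)=16$ if $p_{\min}<0$; $\eta(q)=\lambda_1$ if $q_{\max}<0$ and $\eta(q)=4$ if $q_{\max}\ge 0$. *)

(* Defs.v *)
From HB Require Import structures.
From mathcomp Require Import all_boot all_order all_algebra.
From mathcomp Require Import all_classical all_reals all_analysis.
Set Implicit Arguments. Unset Strict Implicit. Unset Printing Implicit Defensive.
Import Order.TTheory GRing.Theory Num.Theory.
Import numFieldNormedType.Exports.
Local Open Scope classical_set_scope.
Local Open Scope ring_scope.

Section Defs.
Variable R : realType.

Definition fdiff (x : int -> R) : int -> R := fun k => x (k + 1) - x k.

Definition bvp_lhs (p q : int -> R) (f : int -> R -> R) (y : int -> R) (k : int) : R :=
  fdiff (fdiff (fun j => p j * fdiff (fdiff y) (j - 2))) k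
  + fdiff (fun j => q j * fdiff y (j - 1)) k
  + f k (y k).

Definition is_solution (N : nat) (p q : int -> R) (f : int -> R -> R) (y : int -> R) : Prop :=
  (forall k : int, 1 <= k <= N%:Z -> bvp_lhs p q f y k = 0)
  /\ y (-1) = 0 /\ y 0 = 0 /\ y (N%:Z + 1) = 0 /\ y (N%:Z + 2) = 0.

(* membership in E (only the values on Z[-1,N+2] matter) *)
Definition inE (N : nat) (y : int -> R) : Prop :=
  y (-1) = 0 /\ y 0 = 0 /\ y (N%:Z + 1) = 0 /\ y (N%:Z + 2) = 0.

Definition normE (N : nat) (y : int -> R) : R :=
  Num.sqrt (\sum_(1 <= k < N.+1) (y k%:Z) ^+ 2).

Definition Fprim (f : int -> R -> R) (k : int) (s : R) : R :=
  if 0 <= s then (\int[@lebesgue_measure R]_(t in `[0, s]) f k t)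
  else - (\int[@lebesgue_measure R]_(t in `[s, 0]) f k t).

Definition Jfun (N : nat) (p q : int -> R) (f : int -> R -> R) (y : int -> R) : R :=
  \sum_(1 <= k < N.+3) (p k%:Z / 2 * (fdiff (fdiff y) (k%:Z - 2)) ^+ 2)
  - \sum_(1 <= k < N.+2) (q k%:Z / 2 * (fdiff y (k%:Z - 1)) ^+ 2)
  + \sum_(1 <= k < N.+1) Fprim f k%:Z (y k%:Z).

Definition coercive_on_E (N : nat) (J : (int -> R) -> R) : Prop :=
  forall M : R, exists r : R, forall y : int -> R,
    inE N y -> r < normE N y -> M < J y.

(* the element y of E with y~ = v : y(k) = v_(k-1) for k in Z[1,N], 0 otherwise *)
Definition ext_of (N : nat) (v : 'cV[R]_N) : int -> R :=
  fun k => match k with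
           | Posz n => if (1 <= n)%N then
                        (if @insub _ (fun i => i < N)%N 'I_N n.-1 is Some i then v i 0 else 0)
                      else 0
           | Negz _ => 0
           end.

(* V y~ = (Delta y(0), ..., Delta y(N))^T *)
Definition Vmx (N : nat) : 'M[R]_(N.+1, N) :=
  \matrix_(i < N.+1, j < N) fdiff (ext_of (delta_mx j 0)) (i%:Z).

(* W y~ = (Delta^2 y(-1), ..., Delta^2 y(N))^T *)
Definition Wmx (N : nat) : 'M[R]_(N.+2, N) :=
  \matrix_(i < N.+2, j < N) fdiff (fdiff (ext_of (delta_mx j 0))) (i%:Z - 1).

Definition min_eig (n : nat) (A : 'M[R]_n) : R := inf [set a | eigenvalue A a].

Definition lambda1 (N : nat) : R := min_eig ((Vmx N)^T *m Vmx N).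
Definition lambda2 (N : nat) : R := min_eig ((Wmx N)^T *m Wmx N).

Definition pmin (N : nat) (p : int -> R) : R :=
  \big[Num.min/p 1]_(1 <= k < N.+3) p k%:Z.
Definition qmax (N : nat) (q : int -> R) : R :=
  \big[Num.max/q 1]_(1 <= k < N.+2) q k%:Z.

Definition eta_p (N : nat) (p : int -> R) : R :=
  if 0 <= pmin N p then lambda2 N else 16.
Definition eta_q (N : nat) (q : int -> R) : R :=
  if qmax N q < 0 then lambda1 N else 4.

End Defs.

(* Main.v *)
Require Import Defs.
From HB Require Import structures.
From mathcomp Require Import all_boot all_order all_algebra.
From mathcomp Require Import all_classical all_reals all_analysis.
Import Order.TTheory GRing.Theory Num.Theory.
Import numFieldNormedType.Exports.
From mathcomp Require Import lra ring zify.
Local Open Scope classical_set_scope.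
Local Open Scope ring_scope.

Section FTCpart.
Context {R : realType}.
Notation mu := (@lebesgue_measure R).

Definition Gc (g : R -> R) (c s : R) : R := \int[mu]_(t in `[c, s]) g t.

Lemma int_cont {g : R -> R} (a b : R) : continuous g ->
  mu.-integrable `[a, b] (EFin \o g).
Proof.
move=> cg; apply: continuous_compact_integrable; first exact: segment_compact.
exact: continuous_subspaceT.
Qed.

Lemma Fprim_eq (f : int -> R -> R) k c s : continuous (f k) -> c < 0 -> c < s ->
  Fprim f k s = Gc (f k) c s - Gc (f k) c 0.
Proof.
move=> cg c0 cs; rewrite /Fprim /Gc.
case: ifPn => s0.
- have h1 := @Rintegral_itvB _ (f k) (BLeft c) (BRight s) 0 (int_cont c s cg).
  rewrite h1; [|by rewrite bnd_simp ltW|by rewrite bnd_simp].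
  rewrite Rintegral_itv_obnd_cbnd //.
  apply: integrableS (int_cont c s cg) => //; apply: subset_itvr.
  by rewrite bnd_simp ltW.
- rewrite -ltNge in s0.
  have h1 := @Rintegral_itvB _ (f k) (BLeft c) (BRight 0) s (int_cont c 0 cg).
  rewrite Rintegral_itv_obnd_cbnd in h1; last first.
    apply: integrableS (int_cont c 0 cg) => //; apply: subset_itvr.
    by rewrite bnd_simp ltW.
  rewrite -h1; [|by rewrite bnd_simp ltW|by rewrite bnd_simp ltW].
  by rewrite opprB.
Qed.

Lemma Fprim_derive (f : int -> R -> R) k (x : R) : continuous (f k) ->
  is_derive x 1 (Fprim f k) (f k x).
Proof.
move=> cg.
set c := Num.min x 0 - 1.
have hm1 : Num.min x 0 <= 0 by rewrite ge_min lexx orbT.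
have hm2 : Num.min x 0 <= x by rewrite ge_min lexx.
have c0 : c < 0 by rewrite /c; lra.
have cx : c < x by rewrite /c; lra.
have [dG G'] := @continuous_FTC1_closed R (f k) c x (x + 1) (ltr_pwDr ltr01 (lexx x)) (int_cont c (x+1) cg) cx (cg x).
have hG0 : is_derive x 1 (Gc (f k) c) (f k x).
  apply: DeriveDef; first exact: dG.
  by rewrite -derive1E.
have hG : is_derive x 1 (Gc (f k) c - cst (Gc (f k) c 0)) (f k x - 0).
  exact: is_deriveB.
rewrite subr0 in hG.
apply: near_eq_is_derive hG.
near=> s; rewrite (@Fprim_eq f k c s cg c0) //=.
near: s; exact: lt_nbhsr.
Unshelve. all: by end_near. Qed.

Lemma Fprim_cont (f : int -> R -> R) k : continuous (f k) -> continuous (Fprim f k).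
Proof.
move=> cg x; apply: differentiable_continuous; apply/derivable1_diffP.
by have [] := Fprim_derive f k x cg.
Qed.

Lemma Fprim_lb (f : int -> R -> R) k (m : R) : continuous (f k) -> 0 < m ->
  (forall s, m <= `|s| -> 0 <= s * f k s) -> exists C, forall s, C <= Fprim f k s.
Proof.
move=> cg m0 hs.
have cF := Fprim_cont f k cg.
have [c cin cmin] := @EVT_min R (Fprim f k) (- m) m
  ltac:(lra) (continuous_subspaceT cF).
exists (Fprim f k c) => s.
have hd : forall x : R, x \in `]-oo, +oo[%R -> is_derive x 1 (Fprim f k) (f k x).
  by move=> x _; exact: Fprim_derive.
have [sm|sm] := ltP m s.
- have [xi xin hxi] := @MVT_segment R (Fprim f k) (f k) m s (ltW sm)
    (fun x _ => Fprim_derive f k x cg) (continuous_subspaceT cF).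
  move: xin; rewrite in_itv /= => /andP[mx xs].
  have := hs xi; rewrite ger0_norm; last by lra.
  move=> /(_ mx) hxi0.
  have fxi : 0 <= f k xi.
    by rewrite -(pmulr_rge0 _ (_ : 0 < xi)) //; lra.
  have : Fprim f k m <= Fprim f k s.
    rewrite -subr_ge0 hxi; apply: mulr_ge0 => //; lra.
  apply: le_trans; apply: cmin; rewrite in_itv /=; lra.
have [sm'|sm'] := ltP s (- m).
- have [xi xin hxi] := @MVT_segment R (Fprim f k) (f k) s (- m) (ltW sm')
    (fun x _ => Fprim_derive f k x cg) (continuous_subspaceT cF).
  move: xin; rewrite in_itv /= => /andP[mx xs].
  have := hs xi; rewrite ler0_norm; last by lra.
  move=> /(_ ltac:(lra)) hxi0.
  have fxi : f k xi <= 0.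
    by rewrite -(nmulr_rge0 _ (_ : xi < 0)) //; lra.
  have : Fprim f k (- m) <= Fprim f k s.
    rewrite -subr_le0 hxi; apply: mulr_le0_ge0 => //; lra.
  apply: le_trans; apply: cmin; rewrite in_itv /=; lra.
- apply: cmin; rewrite in_itv /=; lra.
Qed.
End FTCpart.

Section Cont.
Context {R : realType} {T : topologicalType}.
Implicit Types (f g : T -> R).

Lemma cont_add f g : continuous f -> continuous g -> continuous (fun x => f x + g x).
Proof. by move=> cf cg x; exact: (continuousD (cf x) (cg x)). Qed.
Lemma cont_mul f g : continuous f -> continuous g -> continuous (fun x => f x * g x).
Proof. by move=> cf cg x; exact: (continuousM (cf x) (cg x)). Qed.
Lemma cont_opp f : continuous f -> continuous (fun x => - f x).
Proof. by move=> cf x; exact: (continuousN (cf x)). Qed.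
Lemma cont_cst (c : R) : continuous (fun _ : T => c).
Proof. by move=> x; exact: cst_continuous. Qed.
Lemma cont_sum (I : Type) (s : seq I) (F : I -> T -> R) :
  (forall i, continuous (F i)) -> continuous (fun x => \sum_(i <- s) F i x).
Proof.
move=> cF; elim: s => [|a s IH].
  by under eq_fun do rewrite big_nil; exact: cont_cst.
under eq_fun do rewrite big_cons; exact: cont_add.
Qed.
End Cont.

Section Box.
Context {R : realType}.

Lemma min_on_closed n (phi : 'rV[R]_n -> R) (C : set 'rV[R]_n) (r : R) :
  continuous phi -> closed C -> (exists u, C u) ->
  (forall u, C u -> forall i, `|u ord0 i| <= r) ->
  exists2 c, C c & forall u, C u -> phi c <= phi u.
Proof.
move=> cphi clC C0 Cb.
have cK : compact C.
  have hb := @rV_compact R n (fun=> `[(- r), r]%classic) (fun=> @segment_compact R (- r) r).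
  apply: (subclosed_compact clC hb).
  move=> u /Cb hu i /=; rewrite in_itv /= -ler_norml; exact: hu.
have [c cin hc] := EVT_min_rV (C0 : (C !=set0)%classic) cK (continuous_subspaceT cphi).
exists c; first by rewrite inE in cin.
by move=> u Cu; apply: hc; rewrite inE.
Qed.
End Box.

Section Rayleigh.
Context {R : realType}.

Lemma sq_expand m (x y : 'I_m -> R) (t : R) :
  \sum_(i < m) (x i + t * y i) ^+ 2 =
  \sum_(i < m) x i ^+ 2 + 2 * t * \sum_(i < m) (x i * y i) + t ^+ 2 * \sum_(i < m) y i ^+ 2.
Proof. by rewrite !mulr_sumr -!big_split /=; apply: eq_bigr => i _; ring. Qed.

Lemma sum_delta m (x : 'I_m -> R) (j : 'I_m) :
  \sum_(l < m) x l * (delta_mx ord0 j : 'rV[R]_m) ord0 l = x j.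
Proof.
rewrite (bigD1 j) //= big1 ?addr0; first by rewrite mxE !eqxx mulr1.
by move=> l lj; rewrite mxE (negbTE lj) andbF mulr0.
Qed.

Lemma sq_le_sum m (x : 'I_m -> R) j : x j ^+ 2 <= \sum_(l < m) x l ^+ 2.
Proof.
rewrite (bigD1 j) //= lerDl; apply: sumr_ge0 => l _; exact: sqr_ge0.
Qed.

Arguments sq_le_sum {m}.
Arguments sum_delta {m}.
Arguments sq_expand {m}.

Lemma real_quad_zero (L K : R) : (forall t, 0 <= 2 * t * L + t ^+ 2 * K) -> L = 0.
Proof.
move=> H; set d := `|K| + 1.
have d0 : 0 < d by rewrite /d ltr_pwDr // normr_ge0.
have Kd : K <= `|K| := ler_norm K.
have := H (- L / d).
set x := d^-1.
have xd : d * x = 1 by rewrite /x divff // gt_eqF.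
have x0 : 0 < x by rewrite /x invr_gt0.
rewrite /= => h.
have h2 : 0 <= L ^+ 2 * x * (- 2 + x * K).
  have e : 2 * (- L * x) * L + (- L * x) ^+ 2 * K = L ^+ 2 * x * (- 2 + x * K) by ring.
  by rewrite -e.
have h3 : x * K < 1.
  have : x * K <= x * `|K| by rewrite ler_pM2l.
  have : x * `|K| < 1 by rewrite -xd [x * _]mulrC ltr_pM2r // /d ltrDl.
  lra.
have : L ^+ 2 * x <= 0 by nra.
have : 0 <= L ^+ 2 by exact: sqr_ge0.
move=> a b; have : L ^+ 2 = 0 by nra.
by move/eqP; rewrite sqrf_eq0 => /eqP.
Qed.

Variables (n m : nat) (B : 'M[R]_(n, m)).
Let Q (u : 'rV[R]_n) := \sum_(i < m) ((u *m B) ord0 i) ^+ 2.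
Let S2 (u : 'rV[R]_n) := \sum_(j < n) (u ord0 j) ^+ 2.

Lemma bil (u w : 'rV[R]_n) :
  \sum_(j < n) (u *m (B *m B^T)) ord0 j * w ord0 j =
  \sum_(i < m) (u *m B) ord0 i * (w *m B) ord0 i.
Proof.
rewrite mulmxA.
under eq_bigr do rewrite mxE mulr_suml.
rewrite exchange_big /=; apply: eq_bigr => i _.
rewrite [(w *m B) _ _]mxE mulr_sumr; apply: eq_bigr => j _.
by rewrite !mxE; ring.
Qed.

Lemma Q_cont : continuous Q.
Proof.
have -> : Q = fun u => \sum_(i < m) (\sum_(j < n) u ord0 j * B j i) *
                                    (\sum_(j < n) u ord0 j * B j i).
  by apply/funext => u; rewrite /Q; apply: eq_bigr => i _; rewrite mxE expr2.
apply: cont_sum => i; apply: cont_mul; apply: cont_sum => j;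
  apply: cont_mul; first exact: coord_continuous; idtac.
all: try exact: coord_continuous. all: exact: (@cont_cst R _ (B j i)). Qed.

Lemma S2_cont : continuous S2.
Proof.
have -> : S2 = fun u => \sum_(j < n) (u ord0 j * u ord0 j).
  by apply/funext => u; rewrite /S2; apply: eq_bigr => i _; rewrite expr2.
apply: cont_sum => j; apply: cont_mul; exact: coord_continuous.
Qed.

Lemma QZ a u : Q (a *: u) = a ^+ 2 * Q u.
Proof.
rewrite /Q mulr_sumr; apply: eq_bigr => i _.
by rewrite -scalemxAl mxE exprMn.
Qed.

Lemma S2Z a u : S2 (a *: u) = a ^+ 2 * S2 u.
Proof.
rewrite /S2 mulr_sumr; apply: eq_bigr => i _.
by rewrite mxE exprMn.
Qed.

Lemma Q_ge0 u : 0 <= Q u.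
Proof. by apply: sumr_ge0 => i _; exact: sqr_ge0. Qed.
Lemma S2_ge0 u : 0 <= S2 u.
Proof. by apply: sumr_ge0 => i _; exact: sqr_ge0. Qed.

Lemma Q_expand c h t : Q (c + t *: h) =
  Q c + 2 * t * \sum_(i < m) ((c *m B) ord0 i * (h *m B) ord0 i) + t ^+ 2 * Q h.
Proof.
rewrite /Q -sq_expand; apply: eq_bigr => i _.
by rewrite mulmxDl -scalemxAl !mxE.
Qed.

Lemma S2_expand c h t : S2 (c + t *: h) =
  S2 c + 2 * t * \sum_(j < n) (c ord0 j * h ord0 j) + t ^+ 2 * S2 h.
Proof.
rewrite /S2 -sq_expand; apply: eq_bigr => i _.
by rewrite !mxE.
Qed.

Lemma rayleigh (u : 'rV[R]_n) : (0 < n)%N ->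
  min_eig (B *m B^T) * S2 u <= Q u.
Proof.
move=> n0.
pose K := S2 @^-1` [set 1].
have clK : closed K.
  apply: preimage_closed; last exact: closed_eq.
  by move=> x _; exact: S2_cont.
have K0 : exists u, K u.
  exists (delta_mx ord0 (Ordinal n0)); rewrite /K /= /S2.
  under eq_bigr do rewrite expr2.
  by rewrite sum_delta mxE !eqxx.
have Kb : forall u, K u -> forall i, `|u ord0 i| <= 1.
  move=> v Kv i; have := sq_le_sum (fun j => v ord0 j) i.
  rewrite /K /= in Kv; rewrite [X in _ <= X]Kv => h.
  rewrite ler_norml; apply/andP; split; nra.
have [c Kc cmin] := @min_on_closed R n Q K 1 Q_cont clK K0 Kb.
set mu := Q c.
have Sc : S2 c = 1 by [].
have claim1 : forall u, mu * S2 u <= Q u.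
  move=> v; have [->|] := eqVneq (S2 v) 0; first by rewrite mulr0 Q_ge0.
  move=> Sv0; have Svp : 0 < S2 v by rewrite lt_def Sv0 S2_ge0.
  set s := Num.sqrt (S2 v).
  have s0 : 0 < s by rewrite sqrtr_gt0.
  have ss : s ^+ 2 = S2 v by rewrite sqr_sqrtr // ltW.
  have Kv : K (s^-1 *: v) by rewrite /K /= S2Z -ss exprVn mulVf // expf_neq0 // gt_eqF.
  have := cmin _ Kv; rewrite QZ -/mu -ss => h.
  have : mu * s ^+ 2 <= s ^+ 2 * (s^-1 ^+ 2 * Q v) by rewrite mulrC ler_pM2l // exprn_gt0.
  have e : s ^+ 2 * (s^-1 ^+ 2 * Q v) = Q v.
    by rewrite mulrA -exprMn divff ?gt_eqF // expr1n mul1r.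
  by rewrite e.
have claim2 : forall h : 'rV[R]_n, \sum_(i < m) ((c *m B) ord0 i * (h *m B) ord0 i)
                        - mu * \sum_(j < n) (c ord0 j * h ord0 j) = 0.
  move=> h; apply: (@real_quad_zero _ (Q h - mu * S2 h)) => t.
  have := claim1 (c + t *: h); rewrite Q_expand S2_expand Sc -/mu.
  set X := \sum_(i < m) _; set Y := \sum_(j < n) _.
  move=> H; have e : 2 * t * (X - mu * Y) + t ^+ 2 * (Q h - mu * S2 h) =
    (mu + 2 * t * X + t ^+ 2 * Q h) - mu * (1 + 2 * t * Y + t ^+ 2 * S2 h) by ring.
  by rewrite e subr_ge0.
have eig : eigenvalue (B *m B^T) mu.
  apply/eigenvalueP; exists c.
    apply/rowP => j; have := claim2 (delta_mx ord0 j).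
    rewrite -bil sum_delta (sum_delta (fun l => c ord0 l)) => /eqP.
    by rewrite subr_eq0 => /eqP ->; rewrite [RHS]mxE.
  apply/negP => /eqP c0; move: Sc; rewrite c0 /S2 big1 => [/esym/eqP|i _]; first by rewrite oner_eq0.
  by rewrite mxE expr0n.
have lb : has_lbound [set a | eigenvalue (B *m B^T) a].
  exists 0 => a /eigenvalueP [v va v0].
  have := bil v v; rewrite va.
  under eq_bigr do rewrite mxE -mulrA -expr2.
  rewrite -mulr_sumr.
  under [X in _ = X]eq_bigr do rewrite -expr2.
  move=> e.
  have [j vj] : exists j, v ord0 j != 0.
    apply/existsP; apply: contraR v0 => /existsPn h; apply/eqP/rowP => j.
    by have := h j; rewrite negbK mxE => /eqP ->.
  have Sv : 0 < S2 v.
    apply: lt_le_trans (sq_le_sum (fun l => v ord0 l) j).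
    by rewrite lt_def sqrf_eq0 vj sqr_ge0.
  have := Q_ge0 v; rewrite /Q -e.
  by rewrite pmulr_lge0.
have mule : min_eig (B *m B^T) <= mu by exact: ge_inf lb mu eig.
apply: le_trans (claim1 u); rewrite ler_wpM2r //; exact: S2_ge0.
Qed.
End Rayleigh.

Section Prob.
Context {R : realType} (N : nat).

Lemma ext_delta (j : 'I_N) (k : int) :
  ext_of (delta_mx j 0 : 'cV[R]_N) k = (k == (j.+1)%:Z)%:R.
Proof.
rewrite /ext_of; case: k => [n|n] //.
case: n => [|n] /=; first by [].
case: insubP => [i ilt vi|nlt] /=.
  by rewrite mxE eqxx andbT eqz_nat eqSS -vi.
rewrite eqz_nat eqSS; case: eqP => // nj; move: nlt; rewrite nj ltn_ord //.
Qed.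

Definition Y (x : 'rV[R]_N) (k : int) : R :=
  \sum_(j < N) x ord0 j * ext_of (delta_mx j 0 : 'cV[R]_N) k.


Notation e j := (ext_of (delta_mx j 0 : 'cV[R]_N)).

Lemma Y_eval x k : Y x k = \sum_(j < N) x ord0 j * (k == (j.+1)%:Z)%:R.
Proof. by apply: eq_bigr => j _; rewrite ext_delta. Qed.

Lemma Y_out x (k : int) : ~~ ((1 <= k) && (k <= N%:Z)) -> Y x k = 0.
Proof.
move=> hk; rewrite Y_eval big1 // => j _.
case: eqP => [ek|_]; last by rewrite mulr0.
have := ltn_ord j; move: hk; rewrite ek => /negP hk jN; exfalso; apply: hk; apply/andP; split; lia.
Qed.

Lemma Y_in x (j : 'I_N) : Y x (j.+1)%:Z = x ord0 j.
Proof.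
rewrite Y_eval (bigD1 j) //= eqxx mulr1 big1 ?addr0 // => i ij.
rewrite eqz_nat eqSS; case: eqP => [/val_inj ji|]; [by move: ij; rewrite ji eqxx|by rewrite mulr0].
Qed.

Lemma Y_lin x d t k : Y (x + t *: d) k = Y x k + t * Y d k.
Proof.
rewrite /Y mulr_sumr -big_split; apply: eq_bigr => j _; rewrite !mxE /=; ring.
Qed.

Lemma Y_delta j k : Y (delta_mx ord0 j) k = e j k.
Proof.
rewrite /Y (bigD1 j) //= mxE !eqxx mul1r big1 ?addr0 // => i ij.
by rewrite mxE (negbTE ij) andbF mul0r.
Qed.

Lemma Y_sq x : \sum_(1 <= k < N.+1) (Y x k%:Z) ^+ 2 = \sum_(j < N) (x ord0 j) ^+ 2.
Proof.
rewrite big_add1 /= big_mkord; apply: eq_bigr => j _; by rewrite Y_in.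
Qed.

Lemma shift_sum (G : int -> R) (s t : nat) : (s <= t)%N ->
  (forall k : int, ~~ ((1 <= k) && (k <= N%:Z)) -> G k = 0) ->
  \sum_(1 <= k < N.+1 + t) G (k%:Z - s%:Z) = \sum_(1 <= k < N.+1) G k%:Z.
Proof.
move=> st G0.
rewrite (@big_cat_nat _ _ _ (N.+1 + s)%N) /=; [|lia|lia].
rewrite [X in _ + X]big1_seq ?addr0; last first.
  move=> k /andP[_]; rewrite mem_index_iota => /andP[h1 h2]; apply: G0.
  apply/negP => /andP[]; lia.
rewrite (@big_cat_nat _ _ _ s.+1) /=; [|lia|lia].
rewrite big1_seq ?add0r; last first.
  move=> k /andP[_]; rewrite mem_index_iota => /andP[h1 h2]; apply: G0.
  apply/negP => /andP[]; lia.
rewrite -[s.+1]/(1 + s)%N big_addn addnK; apply: eq_bigr => k _.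
by rewrite PoszD addrK.
Qed.

Lemma fdiff2E (y : int -> R) (k : int) :
  fdiff (fdiff y) (k - 2) = y k - 2 * y (k - 1) + y (k - 2).
Proof.
rewrite /fdiff.
have -> : k - 2 + 1 + 1 = k by ring.
have -> : k - 2 + 1 = k - 1 by ring.
ring.
Qed.

Lemma fdiffE (y : int -> R) (k : int) : fdiff y (k - 1) = y k - y (k - 1).
Proof. by rewrite /fdiff; have -> : k - 1 + 1 = k by ring. Qed.


Lemma Y_fdiff2 (u : 'rV[R]_N) k : fdiff (fdiff (Y u)) k = \sum_(j < N) u ord0 j * fdiff (fdiff (e j)) k.
Proof. by rewrite /fdiff /Y -!sumrB; apply: eq_bigr => j _; ring. Qed.

Lemma Y_fdiff (u : 'rV[R]_N) k : fdiff (Y u) k = \sum_(j < N) u ord0 j * fdiff (e j) k.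
Proof. by rewrite /fdiff /Y -!sumrB; apply: eq_bigr => j _; ring. Qed.

Lemma W_quad (u : 'rV[R]_N) : (0 < N)%N -> lambda2 R N * \sum_(j < N) (u ord0 j) ^+ 2 <=
  \sum_(1 <= k < N.+3) (fdiff (fdiff (Y u)) (k%:Z - 2)) ^+ 2.
Proof.
move=> n0; have := @rayleigh R N N.+2 (Wmx R N)^T u n0; rewrite trmxK.
move/le_trans; apply; rewrite le_eqVlt; apply/orP; left; apply/eqP.
rewrite big_add1 /= big_mkord; apply: eq_bigr => i _.
rewrite mxE Y_fdiff2.
have -> : (i.+1)%:Z - 2 = i%:Z - 1 by rewrite -addn1 PoszD; ring.
congr (_ ^+ 2); apply: eq_bigr => j _; by rewrite !mxE.
Qed.

Lemma V_quad (u : 'rV[R]_N) : (0 < N)%N -> lambda1 R N * \sum_(j < N) (u ord0 j) ^+ 2 <=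
  \sum_(1 <= k < N.+2) (fdiff (Y u) (k%:Z - 1)) ^+ 2.
Proof.
move=> n0; have := @rayleigh R N N.+1 (Vmx R N)^T u n0; rewrite trmxK.
move/le_trans; apply; rewrite le_eqVlt; apply/orP; left; apply/eqP.
rewrite big_add1 /= big_mkord; apply: eq_bigr => i _.
rewrite mxE Y_fdiff.
have -> : (i.+1)%:Z - 1 = i%:Z by rewrite -addn1 PoszD; ring.
congr (_ ^+ 2); apply: eq_bigr => j _; by rewrite !mxE.
Qed.

Lemma Ysq_out (u : 'rV[R]_N) (k : int) : ~~ ((1 <= k) && (k <= N%:Z)) -> (Y u k) ^+ 2 = 0.
Proof. by move/(Y_out u) ->; rewrite expr0n. Qed.

Lemma W_upper (u : 'rV[R]_N) : \sum_(1 <= k < N.+3) (fdiff (fdiff (Y u)) (k%:Z - 2)) ^+ 2 <=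
  16 * \sum_(j < N) (u ord0 j) ^+ 2.
Proof.
rewrite -Y_sq.
have h0 := @shift_sum (fun k => (Y u k) ^+ 2) 0 2 isT (Ysq_out u).
have h1 := @shift_sum (fun k => (Y u k) ^+ 2) 1 2 isT (Ysq_out u).
have h2 := @shift_sum (fun k => (Y u k) ^+ 2) 2 2 isT (Ysq_out u).
simpl in h0, h1, h2.
apply: (@le_trans _ _ (\sum_(1 <= k < N.+3) (4 * (Y u (k%:Z - 0%:Z)) ^+ 2 + 8 * (Y u (k%:Z - 1%:Z)) ^+ 2 + 4 * (Y u (k%:Z - 2%:Z)) ^+ 2))).
  apply: ler_sum => k _; rewrite fdiff2E subr0.
  set a := Y u k%:Z; set b := Y u (k%:Z - 1); set c := Y u (k%:Z - 2).
  rewrite -subr_ge0.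
  have -> : 4 * a ^+ 2 + 8 * b ^+ 2 + 4 * c ^+ 2 - (a - 2 * b + c) ^+ 2 =
    (a + c + 2 * b) ^+ 2 + 2 * (a - c) ^+ 2 by ring.
  by apply: addr_ge0; [exact: sqr_ge0|apply: mulr_ge0 => //; exact: sqr_ge0].
rewrite !big_split /= -!mulr_sumr.
rewrite (_ : N.+3 = (N.+1 + 2)%N); last by rewrite addn2.
rewrite h0 h1 h2.
rewrite le_eqVlt; apply/orP; left; apply/eqP; ring.
Qed.

Lemma V_upper (u : 'rV[R]_N) : \sum_(1 <= k < N.+2) (fdiff (Y u) (k%:Z - 1)) ^+ 2 <=
  4 * \sum_(j < N) (u ord0 j) ^+ 2.
Proof.
rewrite -Y_sq.
have h0 := @shift_sum (fun k => (Y u k) ^+ 2) 0 1 isT (Ysq_out u).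
have h1 := @shift_sum (fun k => (Y u k) ^+ 2) 1 1 isT (Ysq_out u).
simpl in h0, h1.
apply: (@le_trans _ _ (\sum_(1 <= k < N.+2) (2 * (Y u (k%:Z - 0%:Z)) ^+ 2 + 2 * (Y u (k%:Z - 1%:Z)) ^+ 2))).
  apply: ler_sum => k _; rewrite fdiffE subr0.
  set a := Y u k%:Z; set b := Y u (k%:Z - 1).
  rewrite -subr_ge0.
  have -> : 2 * a ^+ 2 + 2 * b ^+ 2 - (a - b) ^+ 2 = (a + b) ^+ 2 by ring.
  exact: sqr_ge0.
rewrite !big_split /= -!mulr_sumr.
rewrite (_ : N.+2 = (N.+1 + 1)%N); last by rewrite addn1.
rewrite h0 h1.
rewrite le_eqVlt; apply/orP; left; apply/eqP; ring.
Qed.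


Lemma bigmin_le (s : seq nat) (F : nat -> R) a x : x \in s ->
  \big[Num.min/a]_(i <- s) F i <= F x.
Proof.
elim: s => // b s IH; rewrite in_cons big_cons => /orP[/eqP ->|xs].
  by rewrite ge_min lexx.
by rewrite ge_min IH ?orbT.
Qed.

Lemma bigmax_ge (s : seq nat) (F : nat -> R) a x : x \in s ->
  F x <= \big[Num.max/a]_(i <- s) F i.
Proof.
elim: s => // b s IH; rewrite in_cons big_cons => /orP[/eqP ->|xs].
  by rewrite le_max lexx.
by rewrite le_max IH ?orbT.
Qed.

Lemma J_lower (p q : int -> R) (f : int -> R -> R) (u : 'rV[R]_N) (Cf : nat -> R) :
  (0 < N)%N -> (forall k, (1 <= k <= N)%N -> forall s, Cf k <= Fprim f k%:Z s) ->
  (eta_p N p * pmin N p - eta_q N q * qmax N q) / 2 * \sum_(j < N) (u ord0 j) ^+ 2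
   + \sum_(1 <= k < N.+1) Cf k <= Jfun N p q f (Y u).
Proof.
move=> n0 hC.
set S := \sum_(j < N) (u ord0 j) ^+ 2.
set D2 := \sum_(1 <= k < N.+3) (fdiff (fdiff (Y u)) (k%:Z - 2)) ^+ 2.
set D1 := \sum_(1 <= k < N.+2) (fdiff (Y u) (k%:Z - 1)) ^+ 2.
have hP : pmin N p / 2 * D2 <= \sum_(1 <= k < N.+3) (p k%:Z / 2 * (fdiff (fdiff (Y u)) (k%:Z - 2)) ^+ 2).
  rewrite /D2 mulr_sumr; apply: ler_sum_nat => k hk.
  apply: ler_wpM2r; first exact: sqr_ge0.
  rewrite ler_pM2r //; apply: bigmin_le; by rewrite mem_index_iota.
have hQ : \sum_(1 <= k < N.+2) (q k%:Z / 2 * (fdiff (Y u) (k%:Z - 1)) ^+ 2) <= qmax N q / 2 * D1.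
  rewrite /D1 mulr_sumr; apply: ler_sum_nat => k hk.
  apply: ler_wpM2r; first exact: sqr_ge0.
  rewrite ler_pM2r //; apply: (@bigmax_ge _ (fun k => q k%:Z)); by rewrite mem_index_iota.
have hF : \sum_(1 <= k < N.+1) Cf k <= \sum_(1 <= k < N.+1) Fprim f k%:Z (Y u k%:Z).
  apply: ler_sum_nat => k hk; apply: hC; lia.
have hP2 : eta_p N p * pmin N p * S <= pmin N p * D2.
  rewrite /eta_p; case: ifPn => hp.
    rewrite [_ * pmin N p]mulrC -mulrA; apply: ler_wpM2l => //; exact: W_quad.
  rewrite -ltNge in hp.
  rewrite [_ * pmin N p]mulrC -mulrA; apply: ler_wnM2l; [exact: ltW|exact: W_upper].
have hQ2 : qmax N q * D1 <= eta_q N q * qmax N q * S.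
  rewrite /eta_q; case: ifPn => hq.
    rewrite [_ * qmax N q]mulrC -mulrA; apply: ler_wnM2l; [exact: ltW|exact: V_quad].
  rewrite -leNgt in hq.
  rewrite [_ * qmax N q]mulrC -mulrA; apply: ler_wpM2l => //; exact: V_upper.
rewrite /Jfun.
set P := \sum_(1 <= k < N.+3) _ in hP *.
set Qs := \sum_(1 <= k < N.+2) _ in hQ *.
set Fs := \sum_(1 <= k < N.+1) Fprim _ _ _ in hF *.
set a := eta_p N p * pmin N p * S in hP2.
set b := eta_q N q * qmax N q * S in hQ2.
have -> : (eta_p N p * pmin N p - eta_q N q * qmax N q) / 2 * S = a / 2 - b / 2.
  by rewrite /a /b; ring.
have e1 : pmin N p / 2 * D2 = (pmin N p * D2) / 2 by ring.
have e2 : qmax N q / 2 * D1 = (qmax N q * D1) / 2 by ring.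
rewrite e1 in hP; rewrite e2 in hQ.
lra.
Qed.


Lemma J_local (p q : int -> R) (f : int -> R -> R) (y z : int -> R) :
  (forall k : int, -1 <= k <= N%:Z + 2 -> y k = z k) ->
  Jfun N p q f y = Jfun N p q f z.
Proof.
move=> yz; rewrite /Jfun; congr (_ - _ + _); apply: eq_big_nat => k /andP[k1 k2];
  rewrite /fdiff ?yz //; apply/andP; split; lia.
Qed.

Lemma normE_local (y z : int -> R) :
  (forall k : int, 1 <= k <= N%:Z -> y k = z k) -> normE N y = normE N z.
Proof.
move=> yz; rewrite /normE; congr Num.sqrt; apply: eq_big_nat => k /andP[k1 k2].
by rewrite yz //; apply/andP; split; lia.
Qed.

Lemma Y_of_E (y : int -> R) : Defs.inE N y ->
  forall k : int, -1 <= k <= N%:Z + 2 -> Y (\row_j y (j.+1)%:Z) k = y k.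
Proof.
move=> [ym1 [y0 [yN1 yN2]]] k hk.
have [hin|hout] := boolP ((1 <= k) && (k <= N%:Z)).
  case: k hk hin => [m|m] // _ /andP[m1 mN].
  case: m m1 mN => // n _ nN.
  have nN' : (n < N)%N by lia.
  by rewrite (Y_in _ (Ordinal nN')) mxE.
rewrite Y_out //.
have : k = -1 \/ k = 0 \/ k = N%:Z + 1 \/ k = N%:Z + 2.
  move: hk hout => /andP[h1 h2] /negP h3.
  have : ~ (1 <= k /\ k <= N%:Z) by move=> [a b]; apply: h3; rewrite a b.
  lia.
by case=> [->|[->|[->|->]]].
Qed.

End Prob.

Section Main.
Context {R : realType} (N : nat) (f : int -> R -> R) (p q : int -> R).
Hypothesis N1 : (1 <= N)%N.
Hypothesis fc : forall k : int, 1 <= k <= N%:Z -> continuous (f k).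
Hypothesis fm : exists m : R, 0 < m /\
     forall (k : int) (s : R), 1 <= k <= N%:Z -> m <= `|s| -> 0 <= s * f k s.
Hypothesis cpos : eta_p N p * pmin N p - eta_q N q * qmax N q > 0.

Let c := eta_p N p * pmin N p - eta_q N q * qmax N q.

Lemma Cf_ex : exists Cf : nat -> R, forall k, (1 <= k <= N)%N -> forall s, Cf k <= Fprim f k%:Z s.
Proof.
have [m [m0 hm]] := fm.
have h : forall k : nat, exists C : R, (1 <= k <= N)%N -> forall s, C <= Fprim f k%:Z s.
  move=> k; have [hk|hk] := boolP (1 <= k <= N)%N; last by exists 0.
  have hk' : 1 <= k%:Z <= N%:Z by apply/andP; split; lia.
  have [C hC] := @Fprim_lb R f k%:Z m (fc k%:Z hk') m0 (fun s => hm k%:Z s hk').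
  by exists C.
have [Cf hCf] := choice h.
by exists Cf.
Qed.

Lemma J_lowerE (Cf : nat -> R) (y : int -> R) :
  (forall k, (1 <= k <= N)%N -> forall s, Cf k <= Fprim f k%:Z s) ->
  Defs.inE N y ->
  c / 2 * (normE N y) ^+ 2 + \sum_(1 <= k < N.+1) Cf k <= Jfun N p q f y.
Proof.
move=> hC yE.
pose u : 'rV[R]_N := \row_j y (j.+1)%:Z.
have yu := @Y_of_E R N y yE.
rewrite (@J_local R N p q f y (Y N u)); last by move=> k hk; rewrite yu.
rewrite (@normE_local R N y (Y N u)); last by move=> k /andP[h1 h2]; rewrite yu //; apply/andP; split; lia.
rewrite /normE Y_sq sqr_sqrtr; last by apply: sumr_ge0 => i _; exact: sqr_ge0.
exact: J_lower.
Qed.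

Lemma coercive : coercive_on_E N (Jfun N p q f).
Proof.
have [Cf hCf] := Cf_ex.
move=> M.
set SC := \sum_(1 <= k < N.+1) Cf k.
exists (1 + 2 * `|M - SC| / c) => y yE hr.
have := J_lowerE Cf y hCf yE; rewrite -/SC.
set s := normE N y in hr *.
have c0 : 0 < c by [].
have hab : M - SC <= `|M - SC| := ler_norm _.
set A := `|M - SC| in hab hr.
have A0 : 0 <= A by rewrite /A normr_ge0.
have hr1 : 1 <= 1 + 2 * A / c by rewrite lerDl; apply: divr_ge0; [apply: mulr_ge0|apply: ltW].
have s2 : 1 + 2 * A / c < s ^+ 2.
  set r := 1 + 2 * A / c in hr hr1 *.
  have : r * r < s * s. apply: (@le_lt_trans _ _ (r * s)); [apply: ler_wpM2l; lra|rewrite ltr_pM2r; lra].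
  nra.
have : 2 * A / c * c = 2 * A by rewrite divfK // gt_eqF.
move=> e.
have : c * (2 * A / c) < c * s ^+ 2 by rewrite ltr_pM2l //; lra.
rewrite mulrC e => h2.
have : A < c / 2 * s ^+ 2.
  have -> : c / 2 * s ^+ 2 = (c * s ^+ 2) / 2 by ring.
  lra.
lra.
Qed.

End Main.

Section Der.
Context {R : realType}.
Implicit Types (f g : R -> R).

Lemma dadd f g (x a b : R) : is_derive x 1 f a -> is_derive x 1 g b ->
  is_derive x 1 (fun t => f t + g t) (a + b).
Proof. by move=> hf hg; have := is_deriveD hf hg. Qed.

Lemma dopp f (x a : R) : is_derive x 1 f a -> is_derive x 1 (fun t => - f t) (- a).
Proof. by move=> hf; have := is_deriveN hf. Qed.

Lemma dmul f g (x a b : R) : is_derive x 1 f a -> is_derive x 1 g b ->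
  is_derive x 1 (fun t => f t * g t) (f x * b + g x * a).
Proof. by move=> hf hg; have := is_deriveM hf hg. Qed.

Arguments dadd {f g x a b}.
Arguments dopp {f x a}.
Arguments dmul {f g x a b}.

Lemma deq f (x a b : R) : is_derive x 1 f a -> a = b -> is_derive x 1 f b.
Proof. by move=> h <-. Qed.
Arguments deq {f x a b}.

Lemma dcst (c x : R) : is_derive x 1 (fun _ : R => c) 0.
Proof. exact: is_derive_cst. Qed.

Lemma did (x : R) : is_derive x 1 (fun t : R => t) 1.
Proof. exact: is_derive_id. Qed.

Lemma dquad (al a b x : R) :
  is_derive x 1 (fun t => al * (a + t * b) ^+ 2) (al * (2 * (a + x * b) * b)).
Proof.
have -> : (fun t => al * (a + t * b) ^+ 2) = (fun t => al * ((a + t * b) * (a + t * b))).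
  by apply/funext => t; rewrite expr2.
have h1 := (dadd (dcst a x) (dmul (did x) (dcst b x))).
have h2 := dmul h1 h1.
have h3 := dmul (dcst al x) h2.
apply: (deq h3); ring.
Qed.

Lemma dsum (I : eqType) (s : seq I) (F : I -> R -> R) (dF : I -> R) (x : R) :
  (forall i, i \in s -> is_derive x 1 (F i) (dF i)) ->
  is_derive x 1 (fun t => \sum_(i <- s) F i t) (\sum_(i <- s) dF i).
Proof.
elim: s => [_|a s IH hd].
  under eq_fun do rewrite big_nil; rewrite big_nil; exact: dcst.
under eq_fun do rewrite big_cons; rewrite big_cons.
apply: dadd; first by apply: hd; rewrite mem_head.
by apply: IH => i hi; apply: hd; rewrite in_cons hi orbT.
Qed.

Lemma dFprim (f : int -> R -> R) k (a b x : R) : continuous (f k) ->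
  is_derive x 1 (fun t => Fprim f k (a + t * b)) (f k (a + x * b) * b).
Proof.
move=> cg.
have hg : is_derive x 1 (fun t => a + t * b) b.
  have h1 : is_derive x 1 (fun t => a + t * b) (0 + (x * 0 + b * 1)).
    exact: (dadd (dcst a x) (dmul (did x) (dcst b x))).
  by apply: (deq h1); ring.
have := @is_derive1_comp R (Fprim f k) (fun t => a + t * b) x _ _ (Fprim_derive f k (a + x * b) cg) hg.
by [].
Qed.


Lemma fdiff_lin (y ee : int -> R) (t : R) :
  fdiff (fun k => y k + t * ee k) = (fun j => fdiff y j + t * fdiff ee j).
Proof. by apply/funext => j; rewrite /fdiff; ring. Qed.

Lemma dJ (N : nat) (p q : int -> R) (f : int -> R -> R) (y ee : int -> R) (x : R) :
  (forall k, (1 <= k <= N)%N -> continuous (f k%:Z)) ->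
  is_derive x 1 (fun t => Jfun N p q f (fun k => y k + t * ee k))
   (\sum_(1 <= k < N.+3) (p k%:Z / 2 * (2 * (fdiff (fdiff y) (k%:Z - 2) + x * fdiff (fdiff ee) (k%:Z - 2)) * fdiff (fdiff ee) (k%:Z - 2)))
    - \sum_(1 <= k < N.+2) (q k%:Z / 2 * (2 * (fdiff y (k%:Z - 1) + x * fdiff ee (k%:Z - 1)) * fdiff ee (k%:Z - 1)))
    + \sum_(1 <= k < N.+1) (f k%:Z (y k%:Z + x * ee k%:Z) * ee k%:Z)).
Proof.
move=> fc.
have -> : (fun t => Jfun N p q f (fun k => y k + t * ee k)) =
  (fun t => \sum_(1 <= k < N.+3) (p k%:Z / 2 * (fdiff (fdiff y) (k%:Z - 2) + t * fdiff (fdiff ee) (k%:Z - 2)) ^+ 2)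
    - \sum_(1 <= k < N.+2) (q k%:Z / 2 * (fdiff y (k%:Z - 1) + t * fdiff ee (k%:Z - 1)) ^+ 2)
    + \sum_(1 <= k < N.+1) Fprim f k%:Z (y k%:Z + t * ee k%:Z)).
  by apply/funext => t; rewrite /Jfun !fdiff_lin.
have h1 := @dsum nat (index_iota 1 N.+3) _ _ x (fun k _ => dquad (p k%:Z / 2) (fdiff (fdiff y) (k%:Z - 2)) (fdiff (fdiff ee) (k%:Z - 2)) x).
have h2 := @dsum nat (index_iota 1 N.+2) _ _ x (fun k _ => dquad (q k%:Z / 2) (fdiff y (k%:Z - 1)) (fdiff ee (k%:Z - 1)) x).
have h3 : is_derive x 1 (fun t => \sum_(1 <= k < N.+1) Fprim f k%:Z (y k%:Z + t * ee k%:Z))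
   (\sum_(1 <= k < N.+1) (f k%:Z (y k%:Z + x * ee k%:Z) * ee k%:Z)).
  apply: dsum => k; rewrite mem_index_iota => hk; apply: dFprim; apply: fc; lia.
exact: (dadd (dadd h1 (dopp h2)) h3).
Qed.

End Der.

Section Pick.
Context {R : realType}.

Lemma pick (G : int -> R) (b : nat) (s K : int) : 1 <= K + s < b%:Z ->
  \sum_(1 <= k < b) G k%:Z * ((k%:Z - s == K))%:R = G (K + s).
Proof.
move=> hK.
have [n hn] : exists n : nat, K + s = n%:Z.
  exists (absz (K + s)); rewrite gez0_abs //; lia.
rewrite hn (bigD1_seq n) /=; last exact: iota_uniq.
  rewrite big1_seq ?addr0.
    have -> : (n%:Z - s == K) = true by apply/eqP; lia.
    by rewrite mulr1.
  move=> k /andP[kn _].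
  have -> : (k%:Z - s == K) = false by apply/negP => /eqP h; move: kn => /eqP; apply; lia.
  by rewrite mulr0.
rewrite mem_index_iota; lia.
Qed.


Lemma fdiff2K (g : int -> R) (K : int) : fdiff (fdiff g) K = g (K + 2) - 2 * g (K + 1) + g K.
Proof. rewrite /fdiff; have -> : K + 1 + 1 = K + 2 by ring. ring. Qed.

Lemma deriv0 (N : nat) (p q : int -> R) (f : int -> R -> R) (y : int -> R) (j0 : 'I_N) :
  let ee := ext_of (delta_mx j0 0 : 'cV[R]_N) in
  \sum_(1 <= k < N.+3) (p k%:Z / 2 * (2 * (fdiff (fdiff y) (k%:Z - 2) + 0 * fdiff (fdiff ee) (k%:Z - 2)) * fdiff (fdiff ee) (k%:Z - 2)))
    - \sum_(1 <= k < N.+2) (q k%:Z / 2 * (2 * (fdiff y (k%:Z - 1) + 0 * fdiff ee (k%:Z - 1)) * fdiff ee (k%:Z - 1)))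
    + \sum_(1 <= k < N.+1) (f k%:Z (y k%:Z + 0 * ee k%:Z) * ee k%:Z)
  = bvp_lhs p q f y (j0.+1)%:Z.
Proof.
move=> ee; set K := (j0.+1)%:Z.
have hK : 1 <= K <= N%:Z by have := ltn_ord j0; rewrite /K; lia.
pose PA := fun j : int => p j * fdiff (fdiff y) (j - 2).
pose QC := fun j : int => q j * fdiff y (j - 1).
pose FY := fun j : int => f j (y j).
have eeE : forall m, ee m = (m == K)%:R by move=> m; rewrite /ee ext_delta.
have S1 : \sum_(1 <= k < N.+3) (p k%:Z / 2 * (2 * (fdiff (fdiff y) (k%:Z - 2) + 0 * fdiff (fdiff ee) (k%:Z - 2)) * fdiff (fdiff ee) (k%:Z - 2)))
   = \sum_(1 <= k < N.+3) PA k%:Z * ((k%:Z - 0 == K))%:R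
     - 2 * \sum_(1 <= k < N.+3) PA k%:Z * ((k%:Z - 1 == K))%:R
     + \sum_(1 <= k < N.+3) PA k%:Z * ((k%:Z - 2 == K))%:R.
  rewrite mulr_sumr -sumrB -big_split /=; apply: eq_bigr => k _.
  by rewrite (fdiff2E ee) !eeE subr0 /PA; field.
have S2 : \sum_(1 <= k < N.+2) (q k%:Z / 2 * (2 * (fdiff y (k%:Z - 1) + 0 * fdiff ee (k%:Z - 1)) * fdiff ee (k%:Z - 1)))
   = \sum_(1 <= k < N.+2) QC k%:Z * ((k%:Z - 0 == K))%:R
     - \sum_(1 <= k < N.+2) QC k%:Z * ((k%:Z - 1 == K))%:R.
  rewrite -sumrB /=; apply: eq_bigr => k _.
  by rewrite (fdiffE ee) !eeE subr0 /QC; field.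
have S3 : \sum_(1 <= k < N.+1) (f k%:Z (y k%:Z + 0 * ee k%:Z) * ee k%:Z)
   = \sum_(1 <= k < N.+1) FY k%:Z * ((k%:Z - 0 == K))%:R.
  by apply: eq_bigr => k _; rewrite eeE subr0 mul0r addr0.
rewrite S1 S2 S3 !pick; try (apply/andP; split; lia).
rewrite /bvp_lhs -/PA -/QC fdiff2K !addr0.
rewrite [fdiff QC K]/fdiff /FY; ring.
Qed.

End Pick.

Section Final.
Context {R : realType} (N : nat) (f : int -> R -> R) (p q : int -> R).

Lemma contY k : continuous (fun x : 'rV[R]_N => Y N x k).
Proof.
rewrite /Y; apply: cont_sum => j; apply: cont_mul; first exact: coord_continuous.
exact: (@cont_cst R _ (ext_of (delta_mx j 0 : 'cV[R]_N) k)).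
Qed.

Lemma cont_fd (G : 'rV[R]_N -> int -> R) : (forall k, continuous (fun x => G x k)) ->
  forall k, continuous (fun x => fdiff (G x) k).
Proof. by move=> hG k; rewrite /fdiff; apply: cont_add; [exact: hG|apply: cont_opp; exact: hG]. Qed.

Lemma cont_sq (g : 'rV[R]_N -> R) : continuous g -> continuous (fun x => g x ^+ 2).
Proof. by move=> cg; under eq_fun do rewrite expr2; exact: cont_mul. Qed.

Lemma cont_sum_in (s : seq nat) (F : nat -> 'rV[R]_N -> R) :
  (forall i, i \in s -> continuous (F i)) -> continuous (fun x => \sum_(i <- s) F i x).
Proof.
elim: s => [_|a s IH hF].
  by under eq_fun do rewrite big_nil; exact: (@cont_cst R _ 0).
under eq_fun do rewrite big_cons; apply: cont_add; first by apply: hF; rewrite mem_head.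
by apply: IH => i hi; apply: hF; rewrite in_cons hi orbT.
Qed.

Lemma cont_Phi : (forall k, (1 <= k <= N)%N -> continuous (f k%:Z)) ->
  continuous (fun x : 'rV[R]_N => Jfun N p q f (Y N x)).
Proof.
move=> fc; rewrite /Jfun.
have c1 := @cont_fd _ (@cont_fd (Y N) contY).
have c2 := @cont_fd (Y N) contY.
apply: cont_add; first apply: cont_add.
- apply: cont_sum_in => k _; apply: cont_mul; first exact: (@cont_cst R _ (p k%:Z / 2)).
  exact: cont_sq.
- apply: cont_opp; apply: cont_sum_in => k _; apply: cont_mul; first exact: (@cont_cst R _ (q k%:Z / 2)).
  exact: cont_sq.
- apply: cont_sum_in => k; rewrite mem_index_iota => hk x.
  apply: continuous_comp; first exact: contY.
  apply: Fprim_cont; apply: fc; lia.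
Qed.

End Final.

Lemma bvp_zero {R : realType} (p q : int -> R) (f : int -> R -> R) k : bvp_lhs p q f (fun _ => 0) k = f k 0.
Proof. rewrite /bvp_lhs /fdiff /=; rewrite !subrr !mulr0 !subrr; ring. Qed.

Theorem theorem3 (R : realType) (N : nat) (f : int -> R -> R) (p q : int -> R) :
  (1 <= N)%N ->
  (forall k : int, 1 <= k <= N%:Z -> continuous (f k)) ->
  (exists m : R, 0 < m /\
     forall (k : int) (s : R), 1 <= k <= N%:Z -> m <= `|s| -> 0 <= s * f k s) ->
  eta_p N p * pmin N p - eta_q N q * qmax N q > 0 ->
  coercive_on_E N (Jfun N p q f)
  /\ (exists y : int -> R, is_solution N p q f y)
  /\ ((exists k0 : int, 1 <= k0 <= N%:Z /\ f k0 0 <> 0) ->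
      exists y : int -> R, is_solution N p q f y /\ exists k : int, 1 <= k <= N%:Z /\ y k <> 0).
Proof.
move=> N1 fc fm cpos.
have fc' : forall k : nat, (1 <= k <= N)%N -> continuous (f k%:Z).
  by move=> k hk; apply: fc; apply/andP; split; lia.
have hco := coercive N f p q N1 fc fm cpos.
pose Phi (x : 'rV[R]_N) := Jfun N p q f (Y N x).
pose S2 (u : 'rV[R]_N) := \sum_(j < N) u ord0 j ^+ 2.
have [c0 hc0] : exists c0, forall x, Phi c0 <= Phi x.
  have [r hr] := hco (Phi 0).
  set r' := Num.max r 0.
  have r'0 : 0 <= r' by rewrite /r' le_max lexx orbT.
  have rr' : r <= r' by rewrite /r' le_max lexx.
  pose K := S2 @^-1` [set x | x <= r' ^+ 2].
  have clK : closed K.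
    by apply: preimage_closed; [move=> x _; exact: S2_cont| exact: closed_le].
  have K0 : exists u, K u.
    exists 0; rewrite /K /S2 /= big1 ?sqr_ge0 // => j _; by rewrite mxE expr0n.
  have Kb : forall u, K u -> forall i, `|u ord0 i| <= r'.
    move=> u Ku i; have := @sq_le_sum R N (fun j => u ord0 j) i.
    rewrite /K /S2 /= in Ku => h.
    rewrite ler_norml; apply/andP; split; nra.
  have [c Kc cmin] := @min_on_closed R N Phi K r' (@cont_Phi R N f p q fc') clK K0 Kb.
  exists c => x.
  have [hx|hx] := boolP (S2 x <= r' ^+ 2); first by apply: cmin.
  rewrite -ltNge in hx.
  have c0K : K 0.
    rewrite /K /S2 /= big1 ?sqr_ge0 // => j _; by rewrite mxE expr0n.
  apply: (le_trans (cmin _ c0K)); apply: ltW; apply: hr.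
    by split; [|split; [|split]]; apply: Y_out; apply/negP => /andP[]; lia.
  rewrite /normE Y_sq -/(S2 x).
  have S0 : 0 <= S2 x by apply: sumr_ge0 => j _; exact: sqr_ge0.
  set s := Num.sqrt (S2 x).
  have s0 : 0 <= s by exact: sqrtr_ge0.
  have ss : s ^+ 2 = S2 x by rewrite sqr_sqrtr.
  suff : r' < s by lra.
  rewrite ltNge; apply/negP => hs.
  have : s ^+ 2 <= r' ^+ 2 by rewrite ler_pXn2r // ?inE //.
  lra.
have sol : is_solution N p q f (Y N c0).
  split; last first.
    by split; [|split; [|split]]; apply: Y_out; apply/negP => /andP[]; lia.
  move=> k hk.
  have [j0 kj] : exists j0 : 'I_N, k = (j0.+1)%:Z.
    case: k hk => [n|n] // hk; case: n hk => [|n] hk; first by exfalso; lia.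
    have nN : (n < N)%N by lia.
    by exists (Ordinal nN).
  subst k.
  set y := Y N c0.
  set ee := ext_of (delta_mx j0 0 : 'cV[R]_N).
  pose g := fun t : R => Jfun N p q f (fun k => y k + t * ee k).
  have gE : forall t, g t = Phi (c0 + t *: delta_mx ord0 j0).
    move=> t; rewrite /g /Phi; congr Jfun; apply/funext => k; by rewrite Y_lin Y_delta.
  have g0 : g 0 = Phi c0 by rewrite gE scale0r addr0.
  have hd := fun t => dJ N p q f y ee t fc'.
  have hmin : is_derive (0 : R) 1 g 0.
    apply: (@derive1_at_min R g (-1) 1 0).
    - lra.
    - by move=> t _; exact: (@ex_derive _ _ _ _ _ _ _ (hd t)).
    - by rewrite in_itv /=; apply/andP; split; lra.
    - by move=> t _; rewrite g0 gE; exact: hc0.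
  have e1 := @derive_val _ _ _ _ _ _ _ (hd 0).
  have e2 := @derive_val _ _ _ _ _ _ _ hmin.
  rewrite -(deriv0 N p q f y j0) -/ee -e1.
  exact: e2.
split; first exact: hco.
split; first by exists (Y N c0).
move=> [k0 [hk0 fk0]]; exists (Y N c0); split => //.
apply: contrapT => hno; apply: fk0.
have y0 : Y N c0 = (fun _ => 0).
  apply/funext => k.
  have [hk|hk] := boolP ((1 <= k) && (k <= N%:Z)); last exact: Y_out.
  case: (eqVneq (Y N c0 k) 0) => // hne; exfalso; apply: hno; exists k; split => //; exact/eqP.
have := sol.1 k0 hk0; rewrite y0 bvp_zero //.
Qed.
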